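(* Let $H=(V,E,w)$ be a hypergraph with at least one hyperedge, and let $\gamma_1=\min\{D(f): f\in\mathbb{R}^n,\ \sum_v\deg(v)f(v)^2>0\}$, where $D(f)=\frac{\sum_{e\in E}w(e)\big(\max_{u\in e}f(u)+\min_{v\in e}f(v)\big)^2}{\sum_{v\in V}\deg(v)f(v)^2}$. Then there are disjoint sets $L,R\subset V$ with $\mathrm{vol}(L\cup R)>0$ such that $$\beta_H(L,R)\le\sqrt{2\gamma_1}.$$
   Context: A hypergraph $H=(V,E,w)$ has vertex set $V$ with $|V|=n$, hyperedges $E$ (subsets of $V$), weights $w:E\to\mathbb{R}_{>0}$; $\deg(v)=\sum_{e\ni v}w(e)$, $\mathrm{vol}(S)=\sum_{v\in S}\deg(v)$. For $A,B,C\subseteq V$, $w(A,B\mid C)=\sum_{e\in E}w(e)[e\cap A\ne\emptyset\wedge e\cap B\ne\emptyset\wedge e\cap C=\emptyset]$ and $w(A\mid C)=w(A,A\mid C)$. Writing $\overline{X}=V\setminus X$, the bipartiteness ratio of disjoint $L,R$ (with $\mathrm{vol}(L\cup R)>0$) is $\beta_H(L,R)=\frac{2w(L\mid\overline{L})+2w(R\mid\overline{R})+w(L,\overline{L\cup R}\mid R)+w(R,\overline{L\cup R}\mid L)}{\mathrm{vol}(L\cup R)}$. The quantity $\gamma_1$ is the minimum eigenvalue of the paper's hypergraph operator $D_H^{-1}J_H$. *)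

(* Defs.v *)
From HB Require Import structures.
From mathcomp Require Import all_boot all_order all_algebra.
From mathcomp Require Import reals.
Set Implicit Arguments. Unset Strict Implicit. Unset Printing Implicit Defensive.
Import Order.TTheory GRing.Theory Num.Theory.
Local Open Scope ring_scope.

Section Hypergraph.
Variables (R : realType) (V : finType) (E : {set {set V}}) (w : {set V} -> R).

Definition hdeg (v : V) : R := \sum_(e in E | v \in e) w e.

Definition hvol (S : {set V}) : R := \sum_(v in S) hdeg v.

Definition hw3 (A B C : {set V}) : R :=
  \sum_(e in E | [&& e :&: A != set0, e :&: B != set0 & e :&: C == set0]) w e.

Definition beta (L Rs : {set V}) : R :=
  (2 * hw3 L L (~: L) + 2 * hw3 Rs Rs (~: Rs)
   + hw3 L (~: (L :|: Rs)) Rs + hw3 Rs (~: (L :|: Rs)) L) / hvol (L :|: Rs).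

(* max / min of f over a (nonempty) hyperedge; value 0 on the empty set
   (never used: hyperedges are assumed nonempty) *)
Definition emax (f : V -> R) (e : {set V}) : R :=
  if [pick u in e] is Some u0 then \big[Num.max/f u0]_(u in e) f u else 0.
Definition emin (f : V -> R) (e : {set V}) : R :=
  if [pick u in e] is Some u0 then \big[Num.min/f u0]_(u in e) f u else 0.

Definition rq_den (f : V -> R) : R := \sum_(v : V) hdeg v * f v ^+ 2.

Definition Dq (f : V -> R) : R :=
  (\sum_(e in E) w e * (emax f e + emin f e) ^+ 2) / rq_den f.

Definition is_gamma1 (g : R) : Prop :=
  (exists f : V -> R, 0 < rq_den f /\ Dq f = g) /\
  (forall f : V -> R, 0 < rq_den f -> g <= Dq f).

End Hypergraph.

(* Main.v *)
Require Import Defs.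
From HB Require Import structures.
From mathcomp Require Import all_boot all_order all_algebra.
From mathcomp Require Import reals.
From mathcomp Require Import ring lra.
Set Implicit Arguments. Unset Strict Implicit. Unset Printing Implicit Defensive.
Import Order.TTheory GRing.Theory Num.Theory.
Local Open Scope ring_scope.

Section Aux.
Variables (R : realType) (V : finType) (f : V -> R).

Lemma emax_ge (e : {set V}) u : u \in e -> f u <= emax f e.
Proof.
move=> ue; rewrite /emax; case: pickP => [u0 _|h]; last by rewrite h in ue.
by rewrite (bigD1 u) //= le_max lexx.
Qed.

Lemma emin_le (e : {set V}) u : u \in e -> emin f e <= f u.
Proof.
move=> ue; rewrite /emin; case: pickP => [u0 _|h]; last by rewrite h in ue.
by rewrite (bigD1 u) //= ge_min lexx.
Qed.

Lemma emax_in (e : {set V}) : e != set0 -> exists2 v, v \in e & emax f e = f v.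
Proof.
case/set0Pn => u ue; rewrite /emax; case: pickP => [u0 u0e|h]; last by rewrite h in ue.
apply: (big_ind (fun x => exists2 v, v \in e & x = f v)) => //.
- by exists u0.
- move=> x y [v1 h1 ->] [v2 h2 ->]; case: (leP (f v1) (f v2)) => h.
  + by exists v2.
  + by exists v1.
- by move=> i ie; exists i.
Qed.

Lemma emin_in (e : {set V}) : e != set0 -> exists2 v, v \in e & emin f e = f v.
Proof.
case/set0Pn => u ue; rewrite /emin; case: pickP => [u0 u0e|h]; last by rewrite h in ue.
apply: (big_ind (fun x => exists2 v, v \in e & x = f v)) => //.
- by exists u0.
- move=> x y [v1 h1 ->] [v2 h2 ->]; case: (leP (f v1) (f v2)) => h.
  + by exists v1.
  + by exists v2.
- by move=> i ie; exists i.
Qed.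

Definition ind (b : bool) : R := if b then 1 else 0.

Definition T : seq R := [seq s <- undup [seq f v ^+ 2 | v <- enum V] | 0 < s].

Lemma T_uniq : uniq T.
Proof. by rewrite filter_uniq // undup_uniq. Qed.

Lemma memT (s : R) : s \in T -> 0 < s /\ exists v, s = f v ^+ 2.
Proof.
rewrite mem_filter => /andP[s0]; rewrite mem_undup => /mapP[v _ hv]; split => //; by exists v.
Qed.

Lemma inT v : 0 < f v ^+ 2 -> f v ^+ 2 \in T.
Proof.
move=> h; rewrite mem_filter h /= mem_undup; apply/mapP; exists v => //.
by rewrite mem_enum.
Qed.

Definition pr (s : R) : R := \big[Num.max/0]_(v | f v ^+ 2 < s) f v ^+ 2.
Definition ell (s : R) : R := s - pr s.

Lemma pr_ge0 (s : R) : 0 <= pr s.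
Proof.
apply: (big_ind (fun x => 0 <= x)) => // [x y hx hy|i _].
  by rewrite le_max hx.
exact: sqr_ge0.
Qed.

Lemma pr_lt (s : R) : 0 < s -> pr s < s.
Proof.
move=> s0; apply: (big_ind (fun x => x < s)) => // x y hx hy.
by rewrite gt_max hx hy.
Qed.

Lemma pr_ub (s : R) v : f v ^+ 2 < s -> f v ^+ 2 <= pr s.
Proof. by move=> h; rewrite /pr (bigD1 v) //= le_max lexx. Qed.

Lemma pr_attain (s : R) : pr s = 0 \/ exists2 v, f v ^+ 2 < s & pr s = f v ^+ 2.
Proof.
apply: (big_ind (fun x => x = 0 \/ exists2 v, f v ^+ 2 < s & x = f v ^+ 2)).
- by left.
- move=> x y hx hy; case: (leP x y) => h.
  + by [].
  + by [].
- by move=> i hi; right; exists i.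
Qed.

Lemma ell_gt0 (s : R) : 0 < s -> 0 < ell s.
Proof. by move=> s0; rewrite /ell subr_gt0 pr_lt. Qed.

Lemma key (t s : R) : t \in T -> 0 < s -> (t < s) = (t <= pr s).
Proof.
move=> /memT [t0 [u ->]] s0; apply/idP/idP => h.
- exact: pr_ub.
- apply: (le_lt_trans h). exact: pr_lt.
Qed.

Lemma tele0 (y : R) : y <= 0 -> \sum_(s <- T) ell s * ind (s <= y) = 0.
Proof.
move=> y0; rewrite big_seq big1 // => s /memT [s0 _].
rewrite /ind; case: ifP => h; last by rewrite mulr0.
by have := le_trans h y0; rewrite leNgt s0.
Qed.

Lemma tele (x : R) : (exists v, x = f v ^+ 2) -> \sum_(s <- T) ell s * ind (s <= x) = x.
Proof.
suff H : forall (n : nat) (x : R), (#|[set v | (f v ^+ 2 < x)%R]| < n)%N -> (exists v, x = f v ^+ 2) ->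
    \sum_(s <- T) ell s * ind (s <= x) = x.
  by apply: H; apply: ltnSn.
elim=> [//|n IH] {}x hn [v hv].
have [x0|xp] := leP x 0.
  rewrite tele0 //; apply/eqP; rewrite eq_le x0 andbT hv; exact: sqr_ge0.
have xT : x \in T by rewrite hv inT // -hv.
have -> : \sum_(s <- T) ell s * ind (s <= x) =
   \sum_(s <- T) ell s * ind (s == x) + \sum_(s <- T) ell s * ind (s <= pr x).
  rewrite -big_split /= big_seq [RHS]big_seq; apply: eq_bigr => s sT.
  rewrite -mulrDr; congr (_ * _).
  have [->|sx] := eqVneq s x.
    by rewrite lexx leNgt pr_lt // /ind /= addr0.
  by rewrite -key // le_eqVlt (negbTE sx) /= /ind add0r.
rewrite (bigD1_seq x) //= ?T_uniq // big1; last first.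
  by move=> s /negbTE ->; rewrite /ind mulr0.
rewrite eqxx [ind true]/ind mulr1 addr0.
case: (pr_attain x) => [hp|[u hu hp]].
  by rewrite /ell hp tele0 // subr0 addr0.
rewrite /ell hp IH; first by rewrite subrK.
  2: by exists u.
rewrite -ltnS; apply: leq_trans hn; rewrite ltnS; apply: proper_card; apply/properP; split.
  apply/subsetP => z; rewrite !inE => h; apply: lt_trans h _.
  by rewrite -hp pr_lt.
by exists u; rewrite !inE ?ltxx // -hv.
Qed.

Definition Ls (s : R) := [set v | (0 < f v) && (s <= f v ^+ 2)].
Definition Rt (s : R) := [set v | (f v < 0) && (s <= f v ^+ 2)].
Definition condB (A B C e : {set V}) :=
  [&& e :&: A != set0, e :&: B != set0 & e :&: C == set0].
Definition contrib (L Rs e : {set V}) : R :=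
  2 * ind (condB L L (~: L) e) + 2 * ind (condB Rs Rs (~: Rs) e)
  + ind (condB L (~: (L :|: Rs)) Rs e) + ind (condB Rs (~: (L :|: Rs)) L e).
Definition g (a b s : R) : R :=
  if (0 < b) || (a < 0) then ind (s <= a ^+ 2) + ind (s <= b ^+ 2)
  else if b ^+ 2 <= a ^+ 2 then ind (s <= a ^+ 2) - ind (s <= b ^+ 2)
  else ind (s <= b ^+ 2) - ind (s <= a ^+ 2).

Lemma contrib_eq (e : {set V}) (s : R) : e != set0 -> 0 < s ->
  contrib (Ls s) (Rt s) e = g (emax f e) (emin f e) s.
Proof.
move=> ne s0.
have [va va_e ha] := emax_in ne; have [vb vb_e hb] := emin_in ne.
have ub : forall v, v \in e -> emin f e <= f v <= emax f e.
  by move=> v ve; rewrite emin_le // emax_ge.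
move: ha hb ub; set a := emax f e; set b := emin f e => ha hb ub.
have ba : b <= a by have /andP[] := ub va va_e; rewrite -ha.
have h1 : (e :&: Ls s != set0) = (0 < a) && (s <= a ^+ 2).
  apply/set0Pn/andP => [[v]|[a0 sa]].
    rewrite !inE => /and3P[ve fv0 sv]; have /andP[_ fva] := ub v ve.
    split; [exact: lt_le_trans fva | nra].
  by exists va; rewrite !inE va_e -ha a0 sa.
have h3 : (e :&: Rt s != set0) = (b < 0) && (s <= b ^+ 2).
  apply/set0Pn/andP => [[v]|[b0 sb]].
    rewrite !inE => /and3P[ve fv0 sv]; have /andP[fvb _] := ub v ve.
    split; [exact: le_lt_trans fvb fv0 | nra].
  by exists vb; rewrite !inE vb_e -hb b0 sb.
have h2 : (e :&: ~: Ls s == set0) = (0 < b) && (s <= b ^+ 2).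
  rewrite -setDE setD_eq0; apply/subsetP/andP => [H|[b0 sb] v ve].
    by have := H vb vb_e; rewrite inE -hb => /andP.
  have /andP[bv _] := ub v ve; rewrite inE; apply/andP; split; [exact: lt_le_trans bv | nra].
have h4 : (e :&: ~: Rt s == set0) = (a < 0) && (s <= a ^+ 2).
  rewrite -setDE setD_eq0; apply/subsetP/andP => [H|[a0 sa] v ve].
    by have := H va va_e; rewrite inE -ha => /andP.
  have /andP[_ va'] := ub v ve; rewrite inE; apply/andP; split; [exact: le_lt_trans va' a0 | nra].
have h1' : (e :&: Ls s == set0) = ~~ ((0 < a) && (s <= a ^+ 2)) by rewrite -h1 negbK.
have h3' : (e :&: Rt s == set0) = ~~ ((b < 0) && (s <= b ^+ 2)) by rewrite -h3 negbK.
have hO1 : forall v, v \in e -> f v ^+ 2 < s -> e :&: ~: (Ls s :|: Rt s) != set0.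
  move=> v ve hv; apply/set0Pn; exists v; rewrite !inE ve /=.
  by rewrite leNgt hv !andbF.
have hO2 : e :&: ~: (Ls s :|: Rt s) != set0 -> exists2 v, v \in e & f v ^+ 2 < s.
  case/set0Pn => v; rewrite !inE => /andP[ve hv]; exists v => //.
  rewrite ltNge; apply/negP => sv; move: hv; rewrite sv !andbT => /norP[n1 n2].
  rewrite -leNgt in n1; rewrite -leNgt in n2.
  have fz : f v = 0 by apply/le_anti; rewrite n1 n2.
  by move: sv; rewrite fz expr0n /= leNgt s0.
rewrite /contrib /condB h1 h3 h1' h3' h2 h4 /g.
case: (boolP (0 < b)) => b0 /=.
  have a0 : 0 < a by exact: lt_le_trans ba.
  have hO : (e :&: ~: (Ls s :|: Rt s) != set0) = (b ^+ 2 < s).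
    apply/idP/idP => [/hO2 [v ve hv]|h]; last by apply: (hO1 vb); rewrite -?hb.
    have /andP[bv _] := ub v ve; apply: le_lt_trans hv; nra.
  have hba : b ^+ 2 <= a ^+ 2 by nra.
  rewrite hO a0 (ltNge b 0) (ltW b0) /= ?(ltNge a 0) ?(ltW a0) /=.
  case: (leP s (b ^+ 2)) => hsb; case: (leP s (a ^+ 2)) => hsa;
    rewrite /ind /= ?andbF ?andbT /=; lra.
case: (boolP (a < 0)) => a0 /=.
  have b0' : b < 0 by exact: le_lt_trans ba a0.
  have hO : (e :&: ~: (Ls s :|: Rt s) != set0) = (a ^+ 2 < s).
    apply/idP/idP => [/hO2 [v ve hv]|h]; last by apply: (hO1 va); rewrite -?ha.
    have /andP[_ va'] := ub v ve; apply: le_lt_trans hv; nra.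
  have hab : a ^+ 2 <= b ^+ 2 by nra.
  rewrite hO b0' (ltNge 0 a) (ltW a0) /=.
  case: (leP s (b ^+ 2)) => hsb; case: (leP s (a ^+ 2)) => hsa;
    rewrite /ind /= ?andbF ?andbT /=; lra.
rewrite -leNgt in b0; rewrite -leNgt in a0.
have hA : (0 < a) && (s <= a ^+ 2) = (s <= a ^+ 2).
  apply/andP/idP => [[]//|sa]; split => //; rewrite lt_neqAle a0 andbT.
  by apply/eqP => a00; move: sa; rewrite -a00 expr0n /= leNgt s0.
have hB : (b < 0) && (s <= b ^+ 2) = (s <= b ^+ 2).
  apply/andP/idP => [[]//|sb]; split => //; rewrite lt_neqAle b0 andbT.
  by apply/eqP => b00; move: sb; rewrite b00 expr0n /= leNgt s0.
rewrite hA hB /= ?andbF.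
case: (leP s (b ^+ 2)) => hsb; case: (leP s (a ^+ 2)) => hsa; rewrite /= ?andbF ?andbT.
- case: ifP => _; rewrite /ind /=; lra.
- rewrite (hO1 va) -?ha //; case: ifP => h; rewrite /ind /=; lra.
- rewrite (hO1 vb) -?hb //; case: ifP => h; rewrite /ind /=; lra.
- case: ifP => h; rewrite /ind /=; lra.
Qed.

Definition Bv (a b : R) : R :=
  if (0 < b) || (a < 0) then a ^+ 2 + b ^+ 2 else `|a ^+ 2 - b ^+ 2|.

Lemma sum_g a b : (exists v, a = f v) -> (exists v, b = f v) ->
  \sum_(s <- T) ell s * g a b s = Bv a b.
Proof.
move=> [va ha] [vb hb].
have ta : \sum_(s <- T) ell s * ind (s <= a ^+ 2) = a ^+ 2 by apply: tele; exists va; rewrite ha.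
have tb : \sum_(s <- T) ell s * ind (s <= b ^+ 2) = b ^+ 2 by apply: tele; exists vb; rewrite hb.
rewrite /g /Bv; case: ifP => _.
  rewrite -[RHS]/(a ^+ 2 + b ^+ 2) -{2}ta -{2}tb -big_split /=.
  by apply: eq_bigr => s _; rewrite mulrDr.
have sB : forall x y : R, \sum_(s <- T) ell s * (ind (s <= x) - ind (s <= y)) =
    \sum_(s <- T) ell s * ind (s <= x) - \sum_(s <- T) ell s * ind (s <= y).
  by move=> x y; rewrite -sumrB; apply: eq_bigr => s _; rewrite mulrBr.
case: (boolP (b ^+ 2 <= a ^+ 2)) => h.
  by rewrite sB ta tb ger0_norm // subr_ge0.
by rewrite sB ta tb ler0_norm ?opprB // subr_le0 ltW // ltNge.
Qed.

Lemma Bv_ge0 a b : 0 <= Bv a b.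
Proof. rewrite /Bv; case: ifP => _ //; apply: addr_ge0; exact: sqr_ge0. Qed.

Lemma Bv_bound a b S : b <= a -> a ^+ 2 <= S -> b ^+ 2 <= S ->
  (a != b -> a ^+ 2 + b ^+ 2 <= S) -> Bv a b ^+ 2 <= (a + b) ^+ 2 * (2 * S).
Proof.
move=> ba aS bS abS; rewrite /Bv; case: ifP => hs.
  have h1 : a ^+ 2 + b ^+ 2 <= (a + b) ^+ 2.
    case/orP: hs => h; nra.
  have h2 : a ^+ 2 + b ^+ 2 <= 2 * S by lra.
  rewrite expr2; apply: ler_pM => //; apply: addr_ge0; exact: sqr_ge0.
have -> : `|a ^+ 2 - b ^+ 2| ^+ 2 = (a + b) ^+ 2 * (a - b) ^+ 2.
  by rewrite real_normK ?num_real //; ring.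
apply: ler_wpM2l; first exact: sqr_ge0.
have [->|nab] := eqVneq a b.
  rewrite subrr expr0n /=; have := sqr_ge0 b; lra.
have := abS nab; have := sqr_ge0 (a + b); nra.
Qed.

Variables (E : {set {set V}}) (w : {set V} -> R).

Lemma hw3E A B C : hw3 E w A B C = \sum_(e in E) w e * ind (condB A B C e).
Proof.
rewrite /hw3 big_mkcondr; apply: eq_bigr => e _.
by rewrite /ind /condB; case: ifP; rewrite ?mulr1 ?mulr0.
Qed.

Definition numer (L Rs : {set V}) : R :=
  2 * hw3 E w L L (~: L) + 2 * hw3 E w Rs Rs (~: Rs)
   + hw3 E w L (~: (L :|: Rs)) Rs + hw3 E w Rs (~: (L :|: Rs)) L.

Lemma numer_eq L Rs : numer L Rs = \sum_(e in E) w e * contrib L Rs e.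
Proof.
rewrite /numer !hw3E !mulr_sumr -!big_split; apply: eq_bigr => e _.
rewrite /contrib !mulrDr ![w e * (2 * _)]mulrCA; reflexivity.
Qed.

Lemma vol_eq (s : R) : 0 < s -> hvol E w (Ls s :|: Rt s) = \sum_v hdeg E w v * ind (s <= f v ^+ 2).
Proof.
move=> s0; rewrite /hvol big_mkcond; apply: eq_bigr => v _.
rewrite /Ls /Rt !inE /ind.
have [fp|fn|fz] := ltrgtP (f v) 0; rewrite /=.
- by rewrite ?orbF; case: ifP; rewrite ?mulr1 ?mulr0.
- by rewrite ?orbF; case: ifP; rewrite ?mulr1 ?mulr0.
- rewrite fz expr0n /= (leNgt s 0) s0 /= mulr0; done.
Qed.

Lemma den_eq : rq_den E w f = \sum_(e in E) w e * \sum_(v in e) f v ^+ 2.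
Proof.
rewrite /rq_den /hdeg.
under eq_bigr do rewrite mulr_suml.
under [RHS]eq_bigr do rewrite mulr_sumr.
rewrite (exchange_big_dep (fun e => e \in E)) //=.
apply: eq_bigr => e eE; rewrite [RHS]big_mkcond [LHS]big_mkcond /=.
  by apply: eq_bigr => v _; rewrite eE.
by move=> i j _ /andP[].
Qed.


Lemma ind_ge0 b : 0 <= ind b.
Proof. by rewrite /ind; case: b. Qed.

Lemma sum_ge1 (e : {set V}) v : v \in e -> f v ^+ 2 <= \sum_(u in e) f u ^+ 2.
Proof.
move=> ve; rewrite (bigD1 v) //= lerDl; apply: sumr_ge0 => u _; exact: sqr_ge0.
Qed.

Lemma sum_ge2 (e : {set V}) v u : v \in e -> u \in e -> v != u ->
  f v ^+ 2 + f u ^+ 2 <= \sum_(x in e) f x ^+ 2.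
Proof.
move=> ve ue vu; rewrite (bigD1 v) //= (bigD1 u) /=; last by rewrite ue eq_sym vu.
rewrite addrA lerDl; apply: sumr_ge0 => x _; exact: sqr_ge0.
Qed.

Lemma edge_bound (e : {set V}) : e != set0 ->
  Bv (emax f e) (emin f e) ^+ 2 <=
  (emax f e + emin f e) ^+ 2 * (2 * \sum_(v in e) f v ^+ 2).
Proof.
move=> ne; have [va va_e ha] := emax_in ne; have [vb vb_e hb] := emin_in ne.
apply: Bv_bound.
- by rewrite hb emax_ge.
- by rewrite ha; apply: sum_ge1.
- by rewrite hb; apply: sum_ge1.
- rewrite ha hb => nab; apply: sum_ge2 => //.
  by apply/eqP => hv; move: nab; rewrite hv eqxx.
Qed.

Lemma amgm (B u Y l : R) : 0 <= B -> 0 <= u -> 0 <= Y -> 0 < l ->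
  B ^+ 2 <= u * Y -> 2 * l * B <= l ^+ 2 * u + Y.
Proof.
move=> B0 u0 Y0 l0 h.
have h1 : l ^+ 2 * B ^+ 2 <= l ^+ 2 * (u * Y) by rewrite ler_wpM2l // sqr_ge0.
have h2 := sqr_ge0 (l ^+ 2 * u - Y).
have h3 : (2 * l * B) ^+ 2 <= (l ^+ 2 * u + Y) ^+ 2 by nra.
rewrite -(@ler_pXn2r _ 2) // ?nnegrE. all: try by rewrite ?addr_ge0 ?mulr_ge0 ?sqr_ge0 // ltW.

Qed.

End Aux.

Unset Implicit Arguments. Set Strict Implicit.

Theorem theorem4 (R : realType) (V : finType) (E : {set {set V}}) (w : {set V} -> R)
  (hw : forall e, e \in E -> 0 < w e)
  (hne : forall e, e \in E -> e != set0)
  (hE : E != set0)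
  (gamma1 : R) (hg : is_gamma1 E w gamma1) :
  exists L Rs : {set V},
    [/\ [disjoint L & Rs], 0 < hvol E w (L :|: Rs)
      & beta E w L Rs <= Num.sqrt (2 * gamma1)].
Proof.
move: hg => [[f [hden hD]] _].
set den := rq_den E w f in hden hD *.
have hX : \sum_(e in E) w e * (emax f e + emin f e) ^+ 2 = gamma1 * den.
  by rewrite -hD /Dq divfK // gt_eqF.
have hXge : forall e, e \in E -> 0 <= w e * (emax f e + emin f e) ^+ 2.
  by move=> e eE; rewrite mulr_ge0 ?sqr_ge0 // ltW // hw.
have g0 : 0 <= gamma1.
  rewrite -hD /Dq divr_ge0 ?(ltW hden) //; exact: sumr_ge0.
set c := Num.sqrt (2 * gamma1).
set S := \sum_(e in E) w e * Bv (emax f e) (emin f e).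
have hdeg0 : forall v, 0 <= hdeg E w v.
  by move=> v; apply: sumr_ge0 => e /andP[eE _]; rewrite ltW // hw.
have vol0 : forall A, 0 <= hvol E w A by move=> A; apply: sumr_ge0 => v _.
have numer0 : forall L Rs, 0 <= numer E w L Rs.
  move=> L Rs; rewrite numer_eq; apply: sumr_ge0 => e eE.
  apply: mulr_ge0; first by rewrite ltW // hw.
  by rewrite /contrib !addr_ge0 ?mulr_ge0 ?ind_ge0.
have hS : S <= c * den.
  have Yeq : \sum_(e in E) w e * (2 * \sum_(v in e) f v ^+ 2) = 2 * den.
    by rewrite /den den_eq mulr_sumr; apply: eq_bigr => e _; rewrite mulrCA.
  have [g00|gn0] := eqVneq gamma1 0.
    have z : forall e, e \in E -> Bv (emax f e) (emin f e) = 0.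
      move=> e eE; have := psumr_eq0P hXge; rewrite hX g00 mul0r => /(_ erefl e eE).
      move/eqP; rewrite mulf_eq0 gt_eqF ?hw //= => /eqP hz.
      have := edge_bound f (hne e eE); rewrite hz mul0r => hb.
      apply/eqP; rewrite -sqrf_eq0 eq_le hb sqr_ge0 //.
    rewrite /S big1 ?mulr_ge0 ?sqrtr_ge0 ?(ltW hden) //.
    by move=> e eE; rewrite z // mulr0.
  have gp : 0 < gamma1 by rewrite lt_neqAle eq_sym gn0 g0.
  have cp : 0 < c by rewrite /c sqrtr_gt0 mulr_gt0.
  have c2 : c ^+ 2 = 2 * gamma1 by rewrite /c sqr_sqrtr // mulr_ge0.
  set l := c / gamma1.
  have lp : 0 < l by rewrite /l divr_gt0.
  have H : 2 * l * S <= l ^+ 2 * (gamma1 * den) + 2 * den.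
    rewrite -hX -Yeq /S mulr_sumr mulr_sumr -big_split /=.
    apply: ler_sum => e eE.
    have wp := hw e eE.
    have := amgm (Bv_ge0 (emax f e) (emin f e)) (sqr_ge0 (emax f e + emin f e))
      (_ : 0 <= 2 * \sum_(v in e) f v ^+ 2) lp (edge_bound f (hne e eE)).
    move=> /(_ _) hh.
    have {}hh := hh (mulr_ge0 (ler0n _ 2) (sumr_ge0 _ (fun v _ => sqr_ge0 (f v)))).
    have := ler_wpM2l (ltW wp) hh.
    by rewrite mulrDr => h; rewrite mulrCA [w e * (l ^+ 2 * _)]mulrCA in h.
  have e1 : l ^+ 2 * (gamma1 * den) = 2 * den.
    rewrite /l; have -> : (c / gamma1) ^+ 2 * (gamma1 * den) = c ^+ 2 * den / gamma1.
      by field; rewrite gn0.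
    by rewrite c2; field; rewrite gn0.
  rewrite e1 in H.
  have H2 : c * S <= c * (c * den).
    have -> : c * S = gamma1 / 2 * (2 * l * S) by rewrite /l; field; rewrite gn0.
    have -> : c * (c * den) = gamma1 / 2 * (2 * den + 2 * den).
      by rewrite mulrA -expr2 c2; field.
    by rewrite ler_wpM2l // divr_ge0.
  by rewrite -(ler_pM2l cp).
have hnum : \sum_(s <- T f) ell f s * numer E w (Ls f s) (Rt f s) = S.
  transitivity (\sum_(s <- T f) \sum_(e in E) w e * (ell f s * g (emax f e) (emin f e) s)).
    apply: eq_big_seq => s sT; rewrite numer_eq mulr_sumr; apply: eq_bigr => e eE.
    by rewrite contrib_eq ?hne // ?(memT sT).1 // mulrCA.
  rewrite exchange_big /=; apply: eq_bigr => e eE.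
  rewrite -mulr_sumr sum_g //.
    by have [v _ ->] := emax_in f (hne e eE); exists v.
  by have [v _ ->] := emin_in f (hne e eE); exists v.
have hvolS : \sum_(s <- T f) ell f s * hvol E w (Ls f s :|: Rt f s) = den.
  transitivity (\sum_(s <- T f) \sum_v hdeg E w v * (ell f s * ind R (s <= f v ^+ 2))).
    apply: eq_big_seq => s sT; rewrite vol_eq ?(memT sT).1 // mulr_sumr.
    by apply: eq_bigr => v _; rewrite mulrCA.
  rewrite exchange_big /=; apply: eq_bigr => v _.
  by rewrite -mulr_sumr tele //; exists v.
case: (boolP (has (fun s => (0 < hvol E w (Ls f s :|: Rt f s)) &&
   (numer E w (Ls f s) (Rt f s) <= c * hvol E w (Ls f s :|: Rt f s))) (T f))) => [|hn].
  case/hasP => s sT /andP[v0 nle]; exists (Ls f s), (Rt f s); split => //.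
    rewrite -setI_eq0; apply/eqP/setP => v; rewrite !inE.
    apply/negbTE/negP => /andP[/andP[h1 _] /andP[h2 _]].
    by have := lt_trans h2 h1; rewrite ltxx.
  by rewrite /beta ler_pdivrMr //.
exfalso.
have hall : forall s, s \in T f ->
    c * hvol E w (Ls f s :|: Rt f s) <= numer E w (Ls f s) (Rt f s).
  move=> s sT; have := hasPn hn s sT; rewrite negb_and -leNgt -ltNge => /orP[h|h].
    have -> : hvol E w (Ls f s :|: Rt f s) = 0 by apply/le_anti; rewrite h vol0.
    by rewrite mulr0.
  exact: ltW.
have [s0 s0T v0] : exists2 s0, s0 \in T f & 0 < hvol E w (Ls f s0 :|: Rt f s0).
  case: (boolP (has (fun s => 0 < hvol E w (Ls f s :|: Rt f s)) (T f))) => [/hasP[s sT h]|hn2].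
    by exists s.
  exfalso; move: hden; rewrite -hvolS big_seq big1 ?ltxx // => s sT.
  have := hasPn hn2 s sT; rewrite -leNgt => h.
  have -> : hvol E w (Ls f s :|: Rt f s) = 0 by apply/le_anti; rewrite h vol0.
  by rewrite mulr0.
have pos : 0 < \sum_(s <- T f) ell f s *
    (numer E w (Ls f s) (Rt f s) - c * hvol E w (Ls f s :|: Rt f s)).
  rewrite (bigD1_seq s0) //= ?T_uniq //.
  have A : 0 <= \sum_(i <- T f | i != s0) ell f i *
      (numer E w (Ls f i) (Rt f i) - c * hvol E w (Ls f i :|: Rt f i)).
    rewrite big_seq_cond; apply: sumr_ge0 => s /andP[sT _].
    apply: mulr_ge0; [apply: ltW; apply: ell_gt0; exact: (memT sT).1 | rewrite subr_ge0; exact: hall].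
  have B : 0 < ell f s0 * (numer E w (Ls f s0) (Rt f s0) - c * hvol E w (Ls f s0 :|: Rt f s0)).
    rewrite mulr_gt0 ?ell_gt0 ?(memT s0T).1 // subr_gt0.
    by have := hasPn hn s0 s0T; rewrite v0 /= -ltNge.
  lra.
have : \sum_(s <- T f) ell f s *
    (numer E w (Ls f s) (Rt f s) - c * hvol E w (Ls f s :|: Rt f s)) = S - c * den.
  rewrite -hnum -hvolS mulr_sumr -sumrB; apply: eq_bigr => s _; ring.
move=> he; move: pos; rewrite he subr_gt0 ltNge hS //.
Qed.
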